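(* Problem (RO-$\Sigma$) has an optimal solution $(B,\beta_1,\ldots,\beta_B)$ satisfying $|\{b\in\{1,\ldots,B\}: i\in\beta_b\}|<|\{b\in\{1,\ldots,B\}: j\in\beta_b\}|$ for all candidates $i<j$ that belong to the same contest.
   Context: A ballot style consists of contests $\mathcal{C}=\{1,\ldots,C\}$, candidates $\mathcal{N}=\{1,\ldots,N\}$ partitioned into nonempty sets $\mathcal{N}_c$ ($c\in\mathcal{C}$), and positive integers $v_c$. A filled-out ballot is a subset $\beta\subseteq\mathcal{N}$; $\mathscr{B}=\{\beta\subseteq\mathcal{N}: |\mathcal{N}_c\cap\beta|\le v_c\ \forall c\}$. For $i\in\mathcal{N}_c$: $T^*_i(\beta_1,\ldots,\beta_B)=\sum_{b=1}^B\mathbb{I}\{i\in\beta_b\text{ and }|\mathcal{N}_c\cap\beta_b|\le v_c\}$, and for a bijection $\sigma$ of $\mathcal{N}$, $T^\sigma_i(\beta_1,\ldots,\beta_B)=\sum_{b=1}^B\mathbb{I}\{\sigma(i)\in\beta_b\text{ and }|\{\sigma(j)\in\beta_b: j\in\mathcal{N}_c\}|\le v_c\}$. $\Sigma$ is the set of non-identity bijections $\mathcal{N}\to\mathcal{N}$. Problem (RO-$\Sigma$): minimize $B$ over $B\in\mathbb{N}$ and $\beta_1,\ldots,\beta_B\in\mathscr{B}$ subject to $T^\sigma(\beta_1,\ldots,\beta_B)\neq T^*(\beta_1,\ldots,\beta_B)$ for all $\sigma\in\Sigma$. *)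

(* Defs.v *)
From mathcomp Require Import all_boot all_fingroup.
Set Implicit Arguments. Unset Strict Implicit. Unset Printing Implicit Defensive.

(* Ballot style: candidates 'I_N (candidate k+1 of the paper is k here, order
   preserved), contests 'I_C, [con i] = the contest c with i \in N_c,
   [v c] = number of votes allowed in contest c. *)

Definition cands (N C : nat) (con : 'I_N -> 'I_C) (c : 'I_C) : {set 'I_N} :=
  [set j | con j == c].

Definition valid_ballot (N C : nat) (con : 'I_N -> 'I_C) (v : 'I_C -> nat)
  (beta : {set 'I_N}) : bool :=
  [forall c, #|cands con c :&: beta| <= v c].

Definition Tstar (N C : nat) (con : 'I_N -> 'I_C) (v : 'I_C -> nat)
  (B : nat) (beta : 'I_B -> {set 'I_N}) (i : 'I_N) : nat :=
  \sum_(b < B) ((i \in beta b) && (#|cands con (con i) :&: beta b| <= v (con i))).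

Definition Tsig (N C : nat) (con : 'I_N -> 'I_C) (v : 'I_C -> nat)
  (B : nat) (beta : 'I_B -> {set 'I_N}) (s : {perm 'I_N}) (i : 'I_N) : nat :=
  \sum_(b < B) ((s i \in beta b) &&
     (#|[set x in beta b | x \in s @: cands con (con i)]| <= v (con i))).

Definition feasible (N C : nat) (con : 'I_N -> 'I_C) (v : 'I_C -> nat)
  (B : nat) (beta : 'I_B -> {set 'I_N}) : Prop :=
  (forall b, valid_ballot con v (beta b)) /\
  (forall s : {perm 'I_N}, s != 1%g ->
     exists i, Tsig con v beta s i <> Tstar con v beta i).

Definition optimal (N C : nat) (con : 'I_N -> 'I_C) (v : 'I_C -> nat)
  (B : nat) (beta : 'I_B -> {set 'I_N}) : Prop :=
  feasible con v beta /\
  (forall (B' : nat) (beta' : 'I_B' -> {set 'I_N}), feasible con v beta' -> B <= B').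

(* Main.v *)
Require Import Defs.
From mathcomp Require Import all_boot all_fingroup.
From mathcomp Require Import zify.
From Stdlib Require Import Classical.

Section S.
Variables (N C : nat) (con : 'I_N -> 'I_C) (v : 'I_C -> nat).

Definition cnt {B} (beta : 'I_B -> {set 'I_N}) (k : 'I_N) := #|[set b | k \in beta b]|.

Lemma cnt_sum B (beta : 'I_B -> {set 'I_N}) k :
  cnt beta k = \sum_(b < B) (k \in beta b : nat).
Proof.
rewrite /cnt -sum1dep_card big_mkcond /=; apply: eq_bigr => b _.
by case: (k \in beta b).
Qed.

Definition validall {B} (beta : 'I_B -> {set 'I_N}) := forall b, valid_ballot con v (beta b).

Lemma Tstar_valid B (beta : 'I_B -> {set 'I_N}) k : validall beta ->
  Tstar con v beta k = cnt beta k.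
Proof.
move=> Hv; rewrite cnt_sum /Tstar; apply: eq_bigr => b _.
by have /forallP/(_ (con k)) -> := Hv b; rewrite andbT.
Qed.

Lemma mem_perm_imset (s : {perm 'I_N}) (A : {set 'I_N}) z :
  (z \in s @: A) = (s^-1%g z \in A).
Proof. by rewrite -{1}(permKV s z) mem_imset //; apply: perm_inj. Qed.

Lemma Tsig_pres B (beta : 'I_B -> {set 'I_N}) (s : {perm 'I_N}) k :
  validall beta -> (forall x, con (s x) = con x) ->
  Tsig con v beta s k = cnt beta (s k).
Proof.
move=> Hv Hs; rewrite cnt_sum /Tsig; apply: eq_bigr => b _.
have -> : [set x in beta b | x \in s @: cands con (con k)] = cands con (con k) :&: beta b.
  apply/setP => x; rewrite !inE mem_perm_imset inE.
  have -> : con (s^-1%g x) = con x by rewrite -{2}(permKV s x) Hs.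
  by rewrite andbC.
by have /forallP/(_ (con k)) -> := Hv b; rewrite andbT.
Qed.


Lemma Tsig_le B (beta : 'I_B -> {set 'I_N}) (s : {perm 'I_N}) k :
  Tsig con v beta s k <= cnt beta (s k).
Proof.
rewrite cnt_sum /Tsig; apply: leq_sum => b _.
by case: (s k \in beta b); rewrite ?leq_b1.
Qed.

Lemma feasible_of_inj B (beta : 'I_B -> {set 'I_N}) :
  validall beta -> injective (cnt beta) -> feasible con v beta.
Proof.
move=> Hv Hinj; split=> // s Hs.
apply: NNPP => Hno.
have Heq : forall i, Tsig con v beta s i = cnt beta i.
  move=> i; rewrite -Tstar_valid //; apply: NNPP => H; apply: Hno; by exists i.
have Hle : forall i, cnt beta i <= cnt beta (s i) by move=> i; rewrite -Heq Tsig_le.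
have Hall : forall i, cnt beta i = cnt beta (s i).
  move=> i; apply/eqP; rewrite eqn_leq Hle /=; rewrite leqNgt; apply/negP => Hlt.
  have Hsum : \sum_(k < N) cnt beta (s k) = \sum_(k < N) cnt beta k.
    by rewrite [RHS](reindex_inj (@perm_inj _ s)).
  have : \sum_(k < N) cnt beta k < \sum_(k < N) cnt beta (s k).
    rewrite (bigD1 i) // [X in _ < X](bigD1 i) //=.
    rewrite -addSn leq_add //; apply: leq_sum => k _; exact: Hle.
  by rewrite Hsum ltnn.
move/eqP: Hs; apply; apply/permP => i; rewrite perm1.
by apply: Hinj; rewrite -Hall.
Qed.

Lemma feasible_distinct B (beta : 'I_B -> {set 'I_N}) i j :
  feasible con v beta -> i != j -> con i = con j -> cnt beta i != cnt beta j.
Proof.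
move=> [Hv Hf] Hij Hc; apply/eqP => Heq.
have Hs : forall x, con (tperm i j x) = con x.
  by move=> x; case: tpermP => // ->.
have Hn : tperm i j != 1%g.
  apply/eqP => /permP /(_ i); rewrite tpermL perm1 => E; by rewrite E eqxx in Hij.
have [k] := Hf _ Hn; rewrite Tsig_pres // Tstar_valid //.
by case: tpermP => [->|->|]; rewrite ?Heq.
Qed.


Section Relabel.
Variables (B : nat) (beta : 'I_B -> {set 'I_N}) (p : {perm 'I_N}).
Hypothesis Hp : forall x, con (p x) = con x.
Definition relab (b : 'I_B) := p @: beta b.

Lemma Hpi x : con (p^-1%g x) = con x.
Proof. by rewrite -{2}(permKV p x) Hp. Qed.

Lemma cnt_rel k : cnt relab (p k) = cnt beta k.
Proof.
rewrite /cnt; apply: eq_card => b; rewrite !inE /relab mem_imset //.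
exact: perm_inj.
Qed.

Lemma valid_rel : validall beta -> validall relab.
Proof.
move=> Hv b; apply/forallP => c; have /forallP/(_ c) := Hv b.
have -> : cands con c :&: relab b = p @: (cands con c :&: beta b).
  apply/setP => x; rewrite mem_perm_imset !inE mem_perm_imset Hpi.
  done.
by rewrite card_imset //; apply: perm_inj.
Qed.

Lemma feasible_rel : feasible con v beta -> feasible con v relab.
Proof.
move=> [Hv Hf]; split; first exact: valid_rel.
move=> s Hs.
pose s0 := (p * s * p^-1)%g.
have Hs0 : s0 != 1%g.
  apply: contra Hs => /eqP E; apply/eqP/permP => x; rewrite perm1.
  have := congr1 (fun q : {perm 'I_N} => q (p^-1%g x)) E.
  rewrite /s0 !permM perm1 permKV; exact: perm_inj.
have [k Hk] := Hf s0 Hs0; exists (p k).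
rewrite Tstar_valid; last exact: valid_rel.
rewrite cnt_rel -Tstar_valid //; move: Hk; apply: contra_not => <-.
rewrite /Tsig Hp; apply: eq_bigr => b _; congr (_ && _).
  rewrite /relab mem_perm_imset /s0 !permM //.
have -> : [set x in p @: beta b | x \in s @: cands con (con k)] =
          p @: [set x in beta b | x \in s0 @: cands con (con k)].
  apply/setP => x; rewrite mem_perm_imset !inE !mem_perm_imset !inE.
  idtac.
  by rewrite /s0 !invMg invgK !permM permKV Hpi.
by rewrite card_imset //; apply: perm_inj.
Qed.
End Relabel.
Arguments relab {B}.


Definition Phi {B} (beta : 'I_B -> {set 'I_N}) := \sum_(k < N) k * cnt beta k.

Lemma Phi_bound B (beta : 'I_B -> {set 'I_N}) : Phi beta <= N * (N * B).
Proof.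
rewrite /Phi -[X in _ <= X * _]card_ord -sum_nat_const.
apply: leq_sum => k _; apply: leq_mul; first exact: ltnW (ltn_ord k).
by rewrite /cnt -[X in _ <= X]card_ord max_card.
Qed.

Lemma Phi_swap B (beta : 'I_B -> {set 'I_N}) i j :
  con i = con j -> i < j -> cnt beta j < cnt beta i ->
  Phi beta < Phi (relab beta (tperm i j)).
Proof.
move=> Hc Hij Hlt.
have Hs : forall x, con (tperm i j x) = con x.
  by move=> x; case: tpermP => // ->.
have Hc' : forall k, cnt (relab beta (tperm i j)) k = cnt beta (tperm i j k).
  by move=> k; rewrite -{1}(tpermK i j k) cnt_rel.
have Hne : i != j by apply/eqP => E; rewrite E ltnn in Hij.
rewrite /Phi (bigD1 i) // (bigD1 j) 1?eq_sym //=.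
rewrite (bigD1 i (F := fun k : 'I_N => k * cnt (relab beta (tperm i j)) k)) //.
rewrite (bigD1 j (F := fun k : 'I_N => k * cnt (relab beta (tperm i j)) k)) 1?eq_sym //=.
rewrite !Hc' tpermL tpermR.
have -> : \sum_(k < N | (k != i) && (k != j)) k * cnt (relab beta (tperm i j)) k =
          \sum_(k < N | (k != i) && (k != j)) k * cnt beta k.
  by apply: eq_bigr => k /andP [H1 H2]; rewrite Hc' tpermD // eq_sym.
rewrite !addnA ltn_add2r.
set a := cnt beta i in Hlt *; set c := cnt beta j in Hlt *.
move: Hij Hlt; set x := nat_of_ord i; set y := nat_of_ord j => Hij Hlt.
nia.
Qed.


Definition ball (b : 'I_(N * N)) : {set 'I_N} :=
  [set k : 'I_N | (val k == b %/ N) && (b %% N < b %/ N)].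

Lemma enc_proof (k r : 'I_N) : k * N + r < N * N.
Proof. have := ltn_ord k; have := ltn_ord r; nia. Qed.

Definition enc (k r : 'I_N) : 'I_(N * N) := Ordinal (enc_proof k r).

Lemma cnt_ball k : cnt ball k = #|[set r : 'I_N | r < k]|.
Proof.
have HN : 0 < N by have := ltn_ord k; lia.
have Hinj : injective (enc k).
  by move=> r r' /(congr1 val) /= E; apply: val_inj => /=; lia.
rewrite /cnt -(card_imset [set r : 'I_N | r < k] Hinj).
apply: eq_card => b; rewrite inE; apply/idP/imsetP.
  rewrite inE => /andP [/eqP Hk Hm].
  exists (Ordinal (ltn_pmod b HN)); first by rewrite inE /= Hk.
  apply: val_inj => /=; rewrite Hk {1}(divn_eq b N); lia.
move=> [r]; rewrite inE => Hr ->; rewrite inE /=.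
have -> : (k * N + r) %/ N = k by have := ltn_ord r; rewrite divnMDl // divn_small // addn0.
have -> : (k * N + r) %% N = r by have := ltn_ord r; rewrite modnMDl modn_small.
by rewrite eqxx.
Qed.

Lemma exists_feasible : (forall c, 0 < v c) ->
  exists B (beta : 'I_B -> {set 'I_N}), feasible con v beta.
Proof.
move=> Hv; exists (N * N), ball; apply: feasible_of_inj.
  move=> b; apply/forallP => c.
  apply: leq_trans (subset_leq_card (subsetIr _ _)) _.
  apply: leq_trans (Hv c); apply/card_le1P => x Hx y.
  move: Hx; rewrite !inE => /andP [/eqP Hx Hm].
  apply/andP/eqP => [[/eqP Hy _]|->]; first by apply: val_inj; rewrite Hx Hy.
  by rewrite Hx eqxx Hm.
move=> k k' E; apply/eqP; apply: contraT => Hne.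
wlog H : k k' E Hne / k < k'.
  move=> W; case: (ltngtP k k') => [H|H|H]; first exact: W H.
    by apply: (W k' k) => //; rewrite eq_sym.
  by move: Hne; rewrite (val_inj H) eqxx.
move: E; rewrite !cnt_ball => E.
have : [set r : 'I_N | r < k] \proper [set r : 'I_N | r < k'].
  apply/properP; split.
    by apply/subsetP => r; rewrite !inE => Hr; apply: ltn_trans Hr H.
  by exists k; rewrite !inE ?ltnn.
by move/proper_card; rewrite E ltnn.
Qed.

End S.

Arguments feasible_distinct {N C con v B beta i j}.
Arguments feasible_rel {N C con v B beta p}.
Arguments Phi_swap {N C con B beta i j}.
Arguments Phi_bound {N B}.
Arguments Phi {N B}.
Arguments cnt {N B}.
Arguments relab {N B}.

Lemma min_ex (P : nat -> Prop) n : P n -> exists m, P m /\ forall k, P k -> m <= k.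
Proof.
elim/ltn_ind: n => n IH Pn.
case: (classic (exists k, k < n /\ P k)) => [[k [Hk Pk]]|H]; first exact: IH Hk Pk.
exists n; split => // k Pk; rewrite leqNgt; apply/negP => Hk; apply: H; by exists k.
Qed.

Theorem proposition1 (N C : nat) (con : 'I_N -> 'I_C) (v : 'I_C -> nat)
  (Hnonempty : forall c : 'I_C, exists i : 'I_N, con i = c)
  (Hv : forall c : 'I_C, 0 < v c) :
  exists (B : nat) (beta : 'I_B -> {set 'I_N}),
    optimal con v beta /\
    (forall i j : 'I_N, con i = con j -> i < j ->
       #|[set b | i \in beta b]| < #|[set b | j \in beta b]|).
Proof.
have [B0 [b0 Hf0]] := @exists_feasible N C con v Hv.
pose P := fun B => exists beta : 'I_B -> {set 'I_N}, feasible con v beta.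
have [Bm [[beta0 Hb0] Hmin]] := @min_ex P B0 (ex_intro _ b0 Hf0).
exists Bm.
have Key : forall m (beta : 'I_Bm -> {set 'I_N}), feasible con v beta ->
    N * (N * Bm) - Phi beta = m ->
    exists beta : 'I_Bm -> {set 'I_N}, optimal con v beta /\
    (forall i j : 'I_N, con i = con j -> i < j ->
       #|[set b | i \in beta b]| < #|[set b | j \in beta b]|).
  elim/ltn_ind => m IH beta Hf Hm.
  case: (classic (forall i j : 'I_N, con i = con j -> i < j ->
       #|[set b | i \in beta b]| < #|[set b | j \in beta b]|)) => Hs.
    exists beta; split => //; split => // B' b' Hf'; apply: Hmin; by exists b'.
  have [i [j [Hc [Hij Hn]]]] : exists i j : 'I_N, con i = con j /\ i < j /\
      ~ (#|[set b | i \in beta b]| < #|[set b | j \in beta b]|).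
    apply: NNPP => H; apply: Hs => i j Hc Hij; apply: NNPP => Hn; apply: H.
    by exists i, j.
  have Hne : i != j by apply/eqP => E; rewrite E ltnn in Hij.
  have Hd := feasible_distinct Hf Hne Hc.
  have Hlt : cnt beta j < cnt beta i.
    move: Hd Hn; rewrite /cnt; lia.
  have Hsp : forall x, con (tperm i j x) = con x.
    by move=> x; case: tpermP => // ->.
  have Hf' := feasible_rel Hsp Hf.
  have Hph := Phi_swap Hc Hij Hlt.
  have Hbd := Phi_bound (relab beta (tperm i j)).
  apply: (IH _ _ _ Hf' erefl); lia.
exact: (Key _ beta0 Hb0 erefl).
Qed.
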